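(* Let $G$ be a graph with maximum degree $\Delta\ge 3$. Then $$\pi_l(G) \le \left\lceil \Delta^2 + \frac{3}{2^{2/3}}\Delta^{5/3} + \frac{2^{2/3}\Delta^{5/3}}{\Delta^{1/3}-2^{1/3}}\right\rceil.$$
   Context: In a vertex-colored graph, a $2j$-repetition is a path $v_1v_2\dots v_{2j}$ on $2j$ vertices with $c(v_i)=c(v_{i+j})$ for all $1\le i\le j$. A vertex-coloring is non-repetitive if it contains no $2j$-repetition for any $j\ge1$. $\pi_l(G)$, the non-repetitive choice number, is the minimum $k$ such that for every assignment of lists of size at least $k$ to the vertices, $G$ has a non-repetitive coloring in which every vertex receives a color from its list. *)

(* Defs.v *)
From Stdlib Require Import Reals.
From mathcomp Require Import all_boot.

Set Implicit Arguments.
Unset Strict Implicit.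
Unset Printing Implicit Defensive.

(* A finite simple graph: vertex type T : finType, adjacency e : rel T,
   assumed symmetric and irreflexive (hypotheses in the theorem). *)

Definition deg (T : finType) (e : rel T) (v : T) : nat := #|[set u | e v u]|.
Definition maxdeg (T : finType) (e : rel T) : nat := \max_(v : T) deg e v.

Definition is_graph_path (T : finType) (e : rel T) (p : seq T) : bool :=
  uniq p && sorted e p.

Definition is_repetition (T : finType) (e : rel T) (c : T -> nat) (p : seq T) : Prop :=
  exists j : nat, [/\ 0 < j, size p = j.*2, is_graph_path e p &
                     map c (take j p) = map c (drop j p)].

Definition nonrepetitive (T : finType) (e : rel T) (c : T -> nat) : Prop :=
  forall p : seq T, ~ is_repetition e c p.

(* G is non-repetitively k-choosable: for every assignment of lists of size at
   least k (colours are natural numbers), there is a non-repetitive colouring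
   choosing each vertex colour from its list. pi_l(G) <= k iff this holds. *)
Definition nonrep_choosable (T : finType) (e : rel T) (k : nat) : Prop :=
  forall L : T -> seq nat, (forall v, k <= size (undup (L v))) ->
    exists c : T -> nat, (forall v, c v \in L v) /\ nonrepetitive e c.

Definition rep_bound (D : R) : R :=
  Rplus (Rplus (Rsqr D)
               (Rmult (Rdiv 3 (Rpower 2 (Rdiv 2 3))) (Rpower D (Rdiv 5 3))))
        (Rdiv (Rmult (Rpower 2 (Rdiv 2 3)) (Rpower D (Rdiv 5 3)))
              (Rminus (Rpower D (Rdiv 1 3)) (Rpower 2 (Rdiv 1 3)))).

Definition ceil_nat (x : R) : nat := Z.to_nat (Z.opp (Z.sub (up (Ropp x)) 1%Z)).

(* Main.v *)
Require Import Defs.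
From Stdlib Require Import Reals Lra ZArith ClassicalEpsilon Classical.
Set Warnings "-notation-overridden,-ambiguous-paths".
From mathcomp Require Import ssreflect ssrfun ssrbool.
Section RealAnalytic.
Local Open Scope R_scope.

Lemma rpow_third (x : R) (n : nat) : 0 < x -> Rpower x (INR n / 3) = (Rpower x (1/3)) ^ n.
Proof.
move=> hx; rewrite -Rpower_pow; last by apply: exp_pos.
rewrite Rpower_mult; f_equal; field.
Qed.

Lemma analytic (D : R) : 3 <= D ->
  let c := Rpower 2 (1/3) in let y := Rpower D (1/3) in
  let b := D * D + c * y ^ 5 in
  D * D < b /\ b + D / (1 - D ^ 2 / b) ^ 2 <= rep_bound D.
Proof.
move=> hD c y b.
have c0 : 0 < c by apply: exp_pos.
have y0 : 0 < y by apply: exp_pos.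
have c3 : c ^ 3 = 2.
  rewrite /c -rpow_third; last lra.
  replace (INR 3 / 3) with 1 by (simpl; field). by rewrite Rpower_1; lra.
have y3 : y ^ 3 = D.
  rewrite /y -rpow_third; last lra.
  replace (INR 3 / 3) with 1 by (simpl; field). by rewrite Rpower_1; lra.
have yc : c < y.
  case: (Rlt_le_dec c y) => // h.
  have : y ^ 3 <= c ^ 3 by apply: pow_incr; lra.
  lra.
have e1 : Rpower D (5 / 3) = y ^ 5.
  rewrite /y -rpow_third; last lra. f_equal; simpl; field.
have e2 : Rpower 2 (2 / 3) = c ^ 2.
  rewrite /c -rpow_third; last lra. f_equal; simpl; field.
have bpos : 0 < c * y ^ 5 by apply: Rmult_lt_0_compat => //; apply: pow_lt.
split; first by rewrite /b; lra.
rewrite /rep_bound e1 e2 -/y -/c /Rsqr.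
have y5 : 0 < y ^ 3 by apply: pow_lt.
have hL : D / (1 - D ^ 2 / b) ^ 2 = y ^ 3 * (y + c) ^ 2 / c ^ 2.
  rewrite /b -y3; field; split; [lra|]; split; [nra|nra].
rewrite hL.
have hinv : / c ^ 2 = c / 2.
  rewrite -c3; field; lra.
rewrite /Rdiv hinv.
have yc0 : 0 < y - c by lra.
set w := / (y - c).
have hw : w * (y - c) = 1 by rewrite /w; field; lra.
have w0 : 0 < w by apply: Rinv_0_lt_compat.
have hb : b = D * D + c * y ^ 5 by [].
rewrite hb.
have E : D * D + 3 * (c * / 2) * y ^ 5 + c ^ 2 * y ^ 5 * w -
   (D * D + c * y ^ 5 + y ^ 3 * (y + c) ^ 2 * (c * / 2)) =
   c ^ 2 * w * (c * y ^ 4 / 2 + c ^ 2 * y ^ 3 / 2) +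
   c ^ 2 * (w * (y - c) - 1) * (y ^ 4 + c * y ^ 3 / 2) by field.
rewrite hw Rminus_diag Rmult_0_r Rmult_0_l Rplus_0_r in E.
have : 0 <= c ^ 2 * w * (c * y ^ 4 / 2 + c ^ 2 * y ^ 3 / 2).
  apply: Rmult_le_pos; first by apply: Rmult_le_pos; [apply: pow_le; lra | lra].
  have : 0 < y ^ 4 by apply: pow_lt.
  have : 0 < c ^ 2 by apply: pow_lt.
  nra.
lra.
Qed.

Lemma ceil_ge x : 0 <= x -> x <= INR (ceil_nat x).
Proof.
move=> x0; rewrite /ceil_nat.
have [h1 h2] := archimed (- x).
have hz : (0 <= - (up (- x) - 1))%Z.
  apply: le_IZR; rewrite opp_IZR minus_IZR /=; lra.
rewrite INR_IZR_INZ Z2Nat.id // opp_IZR minus_IZR /=; lra.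
Qed.

Lemma final_real (n : nat) : (3 <= n)%nat ->
  let D := INR n in
  let b := D * D + Rpower 2 (1/3) * Rpower D (1/3) ^ 5 in
  D * D < b /\ b + D / (1 - D ^ 2 / b) ^ 2 <= INR (ceil_nat (rep_bound D)).
Proof.
move=> hn D b.
have hD : 3 <= D by rewrite /D; replace 3 with (INR 3) by (simpl; ring); apply: le_INR.
have [h1 h2] : D * D < b /\ b + D / (1 - D ^ 2 / b) ^ 2 <= rep_bound D := analytic D hD.
split => //.
apply: Rle_trans (h2) _; apply: ceil_ge.
apply: Rle_trans h2.
have hx : 0 < 1 - D ^ 2 / b.
  have hb : 0 < b by nra.
  have : D ^ 2 / b < 1.
    apply: (Rmult_lt_reg_r b) => //; rewrite /Rdiv Rmult_assoc Rinv_l; lra.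
  lra.
have : 0 <= D / (1 - D ^ 2 / b) ^ 2.
  apply: Rmult_le_pos; first lra.
  apply: Rlt_le; apply: Rinv_0_lt_compat; apply: pow_lt; lra.
nra.
Qed.

End RealAnalytic.

From mathcomp Require Import all_boot all_order all_algebra.
From mathcomp Require Import Rstruct ring lra zify.
Import Order.TTheory GRing.Theory Num.Theory.

Definition pb (P : Prop) : bool := if excluded_middle_informative P then true else false.
Lemma pbP P : reflect P (pb P).
Proof. rewrite /pb; case: excluded_middle_informative => h; constructor; exact h. Qed.

Lemma union_bound (X : eqType) (U : finType) (A : {set U}) (s : seq X) (B : X -> {set U}) :
  (forall f, f \in A -> exists2 x, x \in s & f \in B x) ->
  #|A| <= \sum_(x <- s) #|B x|.
Proof.
elim: s A => [|x s IH] A H.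
  rewrite big_nil leqn0 cards_eq0; apply/eqP/setP=> f; rewrite inE.
  by apply/negbTE/negP => /H [y]; rewrite in_nil.
rewrite big_cons.
have -> : A = (A :&: B x) :|: (A :\: B x) by rewrite setID.
apply: leq_trans (leq_card_setU _ _).1 _.
apply: leq_add; first by rewrite subset_leq_card // subsetIr.
apply: IH => f; rewrite inE => /andP[fnB fA].
have [y] := H f fA; rewrite inE => /orP[/eqP->|ys] fy; first by rewrite fy in fnB.
by exists y.
Qed.

Lemma size_flatten_map (X Y : Type) (s : seq X) (F : X -> seq Y) :
  size (flatten [seq F x | x <- s]) = \sum_(x <- s) size (F x).
Proof. elim: s => [|x s IH]; by rewrite ?big_nil ?big_cons //= size_cat IH. Qed.

Section Walks.
Variables (T : finType) (e : rel T).

Fixpoint walks (n : nat) (x : T) : seq (seq T) :=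
  match n with
  | 0 => [:: [::]]
  | n'.+1 => flatten [seq [seq u :: w | w <- walks n' u] | u <- [seq u <- enum T | e x u]]
  end.

Lemma walks_mem (w : seq T) (x : T) : path e x w -> w \in walks (size w) x.
Proof.
elim: w x => [|u w IH] x /=; first by rewrite inE.
move=> /andP[exu pw]; apply/flatten_mapP; exists u.
  by rewrite mem_filter exu mem_enum.
by apply: map_f; apply: IH.
Qed.

Lemma walks_size (D : nat) (hD : forall v, deg e v <= D) n x :
  size (walks n x) <= D ^ n.
Proof.
elim: n x => [|n IH] x //=.
rewrite size_flatten_map.
apply: leq_trans (_ : \sum_(u <- [seq u <- enum T | e x u]) D ^ n <= _).
  by apply: leq_sum => u _; rewrite size_map IH.
rewrite big_const_seq count_predT iter_addn_0 expnS mulnC leq_mul2r.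
apply/orP; right; apply: leq_trans (hD x).
by rewrite /deg enumT cardsE cardE /enum_mem.
Qed.
End Walks.
Arguments walks {T} e n x.

Lemma rep_ext (T : finType) (e : rel T) (c c' : T -> nat) p :
  is_repetition e c p -> {in p, c =1 c'} -> is_repetition e c' p.
Proof.
case=> j [j0 sz pp hm] hc; exists j; split=> //.
have h1 : {in take j p, c =1 c'} by move=> x /mem_take; apply: hc.
have h2 : {in drop j p, c =1 c'} by move=> x /mem_drop; apply: hc.
have e1 : map c (take j p) = map c' (take j p) by apply/eq_in_map.
have e2 : map c (drop j p) = map c' (drop j p) by apply/eq_in_map.
by rewrite -e1 -e2.
Qed.

Lemma rep_rev (T : finType) (e : rel T) (esym : symmetric e) (c : T -> nat) p :
  is_repetition e c p -> is_repetition e c (rev p).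
Proof.
case=> j [j0 sz /andP[up sp] hm]; exists j; split=> //.
- by rewrite size_rev.
- apply/andP; split; first by rewrite rev_uniq.
  rewrite rev_sorted; apply: sub_sorted sp => x y; by rewrite esym.
have hj : size p - j = j by rewrite sz -addnn addnK.
by rewrite take_rev drop_rev hj !map_rev hm.
Qed.
Arguments rep_ext {T e c c' p}.
Arguments rep_rev {T e} esym {c p}.

Lemma rev_props (T : finType) (e : rel T) (esym : symmetric e) (c : T -> nat) j p :
  size p = j.*2 -> uniq p -> sorted e p -> map c (take j p) = map c (drop j p) ->
  [/\ size (rev p) = j.*2, uniq (rev p), sorted e (rev p) &
      map c (take j (rev p)) = map c (drop j (rev p))].
Proof.
move=> sz up sp hm; split.
- by rewrite size_rev.
- by rewrite rev_uniq.
- rewrite rev_sorted; apply: sub_sorted sp => x y; by rewrite esym.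
have hj : size p - j = j by rewrite sz -addnn addnK.
by rewrite take_rev drop_rev hj !map_rev hm.
Qed.

Section Core.
Variables (T : finType) (e : rel T).
Hypothesis esym : symmetric e.
Variable L : T -> seq nat.
Variable M : nat.
Hypothesis HM : forall v x, x \in L v -> x <= M.

Definition colT := {ffun T -> 'I_M.+1}.
Definition cof (f : colT) : T -> nat := fun u => val (f u).

Definition nonrep_on (S : {set T}) (c : T -> nat) : Prop :=
  forall p, all (fun x => x \in S) p -> ~ is_repetition e c p.

Definition lists_ok (S : {set T}) (f : colT) : bool :=
  [forall u, if u \in S then cof f u \in L u else f u == ord0].

Definition Good (S : {set T}) : {set colT} :=
  [set f | lists_ok S f && pb (nonrep_on S (cof f))].
Definition C (S : {set T}) := #|Good S|.

Definition Ext (S : {set T}) v : {set colT} :=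
  [set f | lists_ok (v |: S) f && pb (nonrep_on S (cof f))].

Definition Kv v : {set 'I_M.+1} := [set x | val x \in L v].

Lemma card_Kv v : size (undup (L v)) <= #|Kv v|.
Proof.
pose t := [seq (inord x : 'I_M.+1) | x <- undup (L v)].
have ut : uniq t.
  rewrite map_inj_in_uniq ?undup_uniq // => x y; rewrite !mem_undup => hx hy.
  move=> h; have := congr1 val h.
  have hx' : x < M.+1 by rewrite ltnS; exact: HM hx.
  have hy' : y < M.+1 by rewrite ltnS; exact: HM hy.
  by rewrite /= !inordK.
apply: (@leq_trans (size t)); first by rewrite size_map.
rewrite -(card_uniqP ut).
apply: subset_leq_card; apply/subsetP => y /mapP[x]; rewrite mem_undup => hx ->.
have hx' : x < M.+1 by rewrite ltnS; exact: HM hx.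
by rewrite inE /= inordK.
Qed.

Definition extf v (xg : 'I_M.+1 * colT) : colT :=
  [ffun u => if u == v then xg.1 else xg.2 u].

Lemma partA (S : {set T}) v : v \notin S -> size (undup (L v)) * C S <= #|Ext S v|.
Proof.
move=> vS.
apply: leq_trans (_ : #|setX (Kv v) (Good S)| <= _).
  by rewrite cardsX leq_mul2r card_Kv orbT.
rewrite -(card_in_imset (f := extf v)); last first.
  move=> [x g] [x' g']; rewrite !inE /= => /andP[_ hg] /andP[_ hg'] h.
  have hx : x = x' by have := congr1 (fun f : colT => f v) h; rewrite !ffunE eqxx.
  congr pair => //; apply/ffunP => u.
  have := congr1 (fun f : colT => f u) h; rewrite !ffunE.
  case: eqP => [->|] // _.
  move: hg hg' => /andP[/forallP/(_ v) + _] /andP[/forallP/(_ v) + _].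
  by rewrite (negbTE vS) => /eqP-> /eqP->.
apply: subset_leq_card; apply/subsetP => f /imsetP[[x g]]; rewrite !inE /= => /andP[hx hg] ->.
move: hg => /andP[/forallP lg /pbP ng].
apply/andP; split.
  apply/forallP => u; rewrite /cof ffunE in_setU1.
  case: eqP => [->|_] //=; exact: lg.
apply/pbP => p hp hr; apply: (ng p hp).
apply: (rep_ext hr) => u /(allP hp) uS; rewrite /cof ffunE /=.
by case: (u =P v) => [eu|//]; rewrite -eu uS in vS.
Qed.

Lemma partB (S : {set T}) v : #|Ext S v| <= C (v |: S) + #|Ext S v :\: Good (v |: S)|.
Proof.
rewrite -{1}(setID (Ext S v) (Good (v |: S))).
apply: leq_trans (leq_card_setU _ _).1 _.
by rewrite leq_add2r; apply: subset_leq_card; exact: subsetIr.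
Qed.

Definition Pj v j : seq (seq T) :=
  flatten [seq [seq rev a ++ v :: b | a <- walks e i v, b <- walks e (j.*2 - i.+1) v]
          | i <- iota 0 j].

Definition valid (S : {set T}) v j (p : seq T) : bool :=
  [&& uniq p, all (fun x => x \in v |: S) p, size p == j.*2 & v \in take j p].

Definition Sp (S : {set T}) v j (p : seq T) : {set T} := (v |: S) :\: [set x in take j p].

Definition Phi j (p : seq T) (g : colT) : colT :=
  [ffun u => if u \in take j p then g (nth u p (index u p + j)) else g u].

Definition restr (S : {set T}) (f : colT) : colT :=
  [ffun u => if u \in S then f u else ord0].

Definition Img (S : {set T}) v j p : {set colT} :=
  if valid S v j p then [set Phi j p g | g in Good (Sp S v j p)] else set0.

Definition idx v := [seq (j, p) | j <- index_iota 1 #|T|.+1, p <- Pj v j].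

Lemma partD (S : {set T}) v : v \notin S -> forall f, f \in Ext S v :\: Good (v |: S) ->
  exists2 jp, jp \in idx v & f \in Img S v jp.1 jp.2.
Proof.
move=> vS f; rewrite !inE => /andP[nG /andP[lo /pbP nr]].
have nr' : ~ nonrep_on (v |: S) (cof f).
  by move=> h; move: nG; rewrite lo /=; move/pbP.
have [p [hp rp]] : exists p, all (fun x => x \in v |: S) p /\ is_repetition e (cof f) p.
  apply: NNPP => hn; apply: nr' => p hp rp; apply: hn; by exists p.
have vp : v \in p.
  apply/negP => vnp; apply: (nr p) rp; apply/allP => x xp.
  move: (allP hp x xp); rewrite in_setU1; case/orP => // /eqP ex; by rewrite -ex xp in vnp.
case: rp => j [j0 sz /andP[up sp] hm].
have [q [hq [sq uq sorq hmq] vq]] : exists q, [/\ all (fun x => x \in v |: S) q,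
   [/\ size q = j.*2, uniq q, sorted e q & map (cof f) (take j q) = map (cof f) (drop j q)]
   & v \in take j q].
  case vt: (v \in take j p); first by exists p.
  exists (rev p); split; first by rewrite all_rev.
    exact: rev_props.
  have hj : size p - j = j by rewrite sz -addnn addnK.
  rewrite take_rev hj mem_rev.
  by move: vp; rewrite -{1}(cat_take_drop j p) mem_cat vt.
set i := index v q.
have ilt : i < j := index_ltn vq.
have iq : i < size q by rewrite sq -addnn ltn_addr.
have vi : nth v q i = v := nth_index v (mem_take vq).
have qdec : q = take i q ++ v :: drop i.+1 q by rewrite -{1}vi -drop_nth // cat_take_drop.
have pa : path e v (rev (take i q)).
  have st : sorted e (take i.+1 q) := take_sorted _ sorq.
  rewrite (take_nth v iq) vi in st.
  have : sorted e (rev (rcons (take i q) v)).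
    by rewrite rev_sorted; apply: sub_sorted st => x y; rewrite esym.
  by rewrite rev_rcons.
have pb' : path e v (drop i.+1 q).
  by have := drop_sorted i sorq; rewrite (drop_nth v iq) vi.
have qP : q \in Pj v j.
  apply/flatten_mapP; exists i; first by rewrite mem_iota.
  apply/allpairsP; exists (rev (take i q), drop i.+1 q); split => /=.
  - have := @walks_mem T e _ _ pa; by rewrite size_rev size_takel // ltnW.
  - have := @walks_mem T e _ _ pb'; by rewrite size_drop sq.
  - rewrite revK; exact: qdec.
exists (j, q).
  apply/allpairsPdep; exists j, q; split => //.
  rewrite mem_index_iota j0 ltnS /=.
  have : size q <= #|T| by rewrite -(card_uniqP uq) max_card.
  by apply: leq_trans; rewrite sq -addnn leq_addr.
rewrite /Img /= /valid uq hq sq eqxx vq /=.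
apply/imsetP; exists (restr (Sp S v j q) f).
  rewrite /Good in_set; apply/andP; split.
    apply/forallP => u; rewrite /cof ffunE; case: ifP => uS'; rewrite uS' //.
    rewrite in_setD in uS'; case/andP: uS' => _ uvS.
    by have := forallP lo u; rewrite uvS.
  apply/pbP => p' hp' rp'; apply: (nr p').
    apply/allP => x /(allP hp'); rewrite in_setD => /andP[xT xvS].
    move: xvS; rewrite in_setU1 => /orP[/eqP ex|//].
    by rewrite ex inE vq in xT.
  apply: (rep_ext rp') => x /(allP hp') xS'; by rewrite /cof ffunE xS'.
apply/ffunP => u; rewrite !ffunE.
case: ifP => ut.
  set w := nth u q (index u q + j).
  have ilt' : index u q < j := index_ltn ut.
  have szd : size (drop j q) = j by rewrite size_drop sq -addnn addnK.
  have szt : size (take j q) = j by rewrite size_takel // sq -addnn leq_addr.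
  have wd : w = nth u (drop j q) (index u q) by rewrite nth_drop addnC.
  have wdrop : w \in drop j q by rewrite wd mem_nth // szd.
  have wS' : w \in Sp S v j q.
    rewrite in_setD inE; apply/andP; split.
      have hdis : ~~ has (mem (take j q)) (drop j q).
        by move: uq; rewrite -{1}(cat_take_drop j q) cat_uniq => /and3P[].
      apply/negP => wt; move/hasP: hdis => h; apply: h; by exists w.
    exact: (allP hq w (mem_drop wdrop)).
  rewrite wS'; apply: val_inj.
  have := congr1 (fun s => nth 0 s (index u q)) hmq.
  rewrite /= (nth_map u) ?szt // (nth_map u) ?szd // nth_take // -wd.
  by rewrite nth_index // (mem_take ut).
case: ifP => uS' //.
have := forallP lo u.
by move: uS'; rewrite in_setD inE ut /= => ->; move/eqP.
Qed.

Lemma size_Pj (D : nat) (hD : forall v, deg e v <= D) v j :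
  size (Pj v j) <= j * D ^ (j.*2).-1.
Proof.
rewrite /Pj size_flatten_map big_seq.
apply: leq_trans (_ : \sum_(i <- iota 0 j | i \in iota 0 j) D ^ (j.*2).-1 <= _).
  apply: leq_sum => i; rewrite mem_iota => /andP[_ ij].
  rewrite size_allpairs.
  apply: leq_trans (leq_mul (@walks_size T e D hD _ _) (@walks_size T e D hD _ _)) _.
  rewrite -expnD; have -> : i + (j.*2 - i.+1) = (j.*2).-1 by rewrite -addnn; lia.
  by [].
by rewrite -big_seq big_const_seq count_predT size_iota iter_addn_0 mulnC.
Qed.

Lemma card_Img (S : {set T}) v j p :
  #|Img S v j p| <= (if valid S v j p then C (Sp S v j p) else 0).
Proof. by rewrite /Img; case: ifP => _; [exact: leq_imset_card | rewrite cards0]. Qed.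

Lemma Sp_props (S : {set T}) v j p : v \notin S -> valid S v j p ->
  Sp S v j p \subset S /\ #|S :\: Sp S v j p| = j.-1.
Proof.
move=> vS /and4P[up hp /eqP sp vt].
have hsub : Sp S v j p \subset S.
  apply/subsetP => x; rewrite in_setD in_setU1 inE => /andP[xt /orP[/eqP ex|//]].
  by rewrite ex vt in xt.
split => //.
have -> : S :\: Sp S v j p = [set x in take j p] :\ v.
  apply/setP => x; rewrite !in_setD !in_setU1 !inE.
  case xS: (x \in S) => /=.
    have xv : (x == v) = false by apply/negbTE; apply: contraNneq vS => <-.
    by rewrite xv; case: (x \in take j p).
  rewrite andbF; case xt: (x \in take j p); last by rewrite andbF.
  have := allP hp x (mem_take xt); rewrite in_setU1 xS orbF => ->; by [].
have ut : uniq (take j p) by apply: take_uniq.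
have := cardsD1 v [set x in take j p].
rewrite inE vt cardsE (card_uniqP ut) size_takel; last by rewrite sp -addnn leq_addr.
by move=> h; rewrite [in RHS]h add1n.
Qed.

Lemma step_nat (S : {set T}) v : v \notin S ->
  size (undup (L v)) * C S <= C (v |: S) + \sum_(jp <- idx v) #|Img S v jp.1 jp.2|.
Proof.
move=> vS; apply: leq_trans (partA S v vS) _; apply: leq_trans (partB S v) _.
rewrite leq_add2l; apply: union_bound; exact: partD.
Qed.
End Core.
Section Geo.
Local Open Scope ring_scope.

Lemma geo (R : realFieldType) (x : R) J : 0 <= x -> x < 1 ->
  (1 - x) ^+ 2 * \sum_(1 <= j < J.+1) j%:R * x ^+ j.-1 <= 1.
Proof.
move=> x0 x1.
have cl : forall J, (1 - x) ^+ 2 * \sum_(1 <= j < J.+1) j%:R * x ^+ j.-1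
   = 1 - J.+1%:R * x ^+ J + J%:R * x ^+ J.+1.
  elim=> [|n IH]; first by rewrite big_geq // mulr0 expr0 mulr1 mul0r addr0 subrr.
  rewrite big_nat_recr //= mulrDr IH !mulrS !exprS; ring.
rewrite cl.
have h : 0 <= x ^+ J := exprn_ge0 J x0.
rewrite mulrS exprS.
have hJ : 0 <= J%:R :> R := ler0n _ _.
have h2 : 0 <= x ^+ J * (J%:R * (1 - x) + 1).
  apply: mulr_ge0 => //; nra.
nra.
Qed.

End Geo.

Section Real.
Local Open Scope ring_scope.
Variables (T : finType) (e : rel T).
Hypothesis esym : symmetric e.
Variable L : T -> seq nat.
Variable M : nat.
Hypothesis HM : forall v x, x \in L v -> (x <= M)%N.
Variables (R : realFieldType) (D k : nat) (b : R).
Hypothesis hD : forall v, (deg e v <= D)%N.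
Hypothesis hk : forall v, (k <= size (undup (L v)))%N.
Hypothesis hb : D%:R ^+ 2 < b.
Hypothesis hbound : forall J,
  b + D%:R * \sum_(1 <= j < J.+1) j%:R * (D%:R ^+ 2 / b) ^+ j.-1 <= k%:R.

Let CS (S : {set T}) : R := (C T e L M S)%:R.

Let b0 : 0 < b.
Proof. apply: le_lt_trans hb; exact: exprn_ge0 (ler0n _ _). Qed.

Definition Pn n := forall S : {set T}, (#|S| < n)%N -> forall v, v \notin S ->
  b * CS S <= CS (v |: S).

Lemma mono n : Pn n -> forall m (S S' : {set T}), S' \subset S -> (#|S| <= n)%N ->
  #|S :\: S'| = m -> b ^+ m * CS S' <= CS S.
Proof.
move=> Pnn; elim=> [|m IH] S S' sub hS hm.
  have -> : S = S'.
    apply/eqP; rewrite eqEsubset; apply/andP; split => //.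
    by rewrite -setD_eq0 -cards_eq0 hm.
  by rewrite expr0 mul1r.
have : (0 < #|S :\: S'|)%N by rewrite hm.
rewrite card_gt0 => /set0Pn[w]; rewrite in_setD => /andP[wS' wS].
have sub' : S' \subset S :\ w.
  apply/subsetP => x xS'; rewrite in_setD1 (subsetP sub x xS') andbT.
  by apply: contraNneq wS' => <-.
have hw : (#|S :\ w| < #|S|)%N by rewrite (cardsD1 w S) wS.
have h1 : b ^+ m * CS S' <= CS (S :\ w).
  apply: IH => //; first by apply: leq_trans (ltnW hw) hS.
  have := cardsD1 w (S :\: S'); rewrite in_setD wS' wS hm.
  have -> : (S :\: S') :\ w = (S :\ w) :\: S'.
    by apply/setP => x; rewrite !inE; case: (x == w); case: (x \in S'); case: (x \in S).
  by move=> [].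
have h2 : b * CS (S :\ w) <= CS S.
  have := Pnn (S :\ w) (leq_trans hw hS) w; rewrite setD11 setD1K //; exact.
rewrite exprS -mulrA; apply: le_trans h2; rewrite ler_pM2l //.
Qed.

Let x := D%:R ^+ 2 / b.

Lemma term_id j : (0 < j)%N ->
  (j * D ^ (j.*2).-1)%:R / b ^+ j.-1 = D%:R * (j%:R * x ^+ j.-1) :> R.
Proof.
case: j => [//|j] _.
have -> : ((j.+1).*2).-1 = (2 * j).+1 by rewrite mul2n doubleS.
rewrite /x natrM natrX exprS exprM expr_div_n /=.
by rewrite mulrA; rewrite [in RHS]mulrA; rewrite !mulrA [(D%:R * j.+1%:R)]mulrC.
Qed.

Lemma stepR n : Pn n -> Pn n.+1.
Proof.
move=> Pnn S hS v vS.
have hS' : (#|S| <= n)%N by [].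
have h1 := @step_nat T e esym L M HM S v vS.
have h2 : (k * C T e L M S <= C T e L M (v |: S) +
    \sum_(jp <- idx T e v) #|Img T e L M S v jp.1 jp.2|)%N.
  by apply: leq_trans h1; rewrite leq_mul2r hk orbT.
move: h2; rewrite -(ler_nat R) natrD natrM natr_sum => h2.
have CS0 : 0 <= CS S by rewrite /CS ler0n.
have key : \sum_(jp <- idx T e v) (#|Img T e L M S v jp.1 jp.2|%:R : R)
   <= CS S * (k%:R - b).
  rewrite /idx big_allpairs_dep /=.
  apply: le_trans (_ : \sum_(j <- index_iota 1 #|T|.+1)
     CS S * (D%:R * (j%:R * x ^+ j.-1)) <= _); last first.
    rewrite -mulr_sumr; apply: (ler_wpM2l CS0); rewrite -mulr_sumr.
    have := hbound #|T|; rewrite -/x => hh; lra.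
  rewrite big_seq [X in _ <= X]big_seq; apply: ler_sum => j.
  rewrite mem_index_iota => /andP[j1 _].
  apply: le_trans (_ : \sum_(p <- Pj T e v j) CS S / b ^+ j.-1 <= _).
    apply: ler_sum => p _.
    have := card_Img T e L M S v j p; rewrite -(ler_nat R) => hc; apply: le_trans hc _.
    case: ifP => hv; last by rewrite mulr_ge0 // invr_ge0 exprn_ge0 // ltW.
    have [sub cd] := @Sp_props T S v j p vS hv.
    have := @mono n Pnn _ _ _ sub hS' cd.
    rewrite ler_pdivlMr ?exprn_gt0 // mulrC; exact.
  rewrite big_const_seq count_predT iter_addr_0 -[_ *+ size _]mulr_natl.
  rewrite -term_id // mulrCA; apply: (ler_wpM2l CS0); apply: ler_wpM2r.
    by rewrite invr_ge0 exprn_ge0 // ltW.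
  by rewrite ler_nat; exact: size_Pj.
lra.
Qed.

Lemma all_Pn n : Pn n.
Proof. elim: n => [S|n IH]; [by rewrite ltn0 | exact: stepR]. Qed.

Lemma exists_col : exists c : T -> nat, (forall v, c v \in L v) /\ nonrepetitive e c.
Proof.
have h := @mono #|T|.+1 (all_Pn _) #|T| setT set0 (sub0set _).
have := h (leq_trans (max_card _) (leqnSn _)).
rewrite setD0 cardsT => /(_ erefl) h2.
have f0G : [ffun _ => ord0] \in Good T e L M set0.
  rewrite inE; apply/andP; split.
    apply/forallP => u; by rewrite inE ffunE.
  apply/pbP => p hp [j [j0 sz _ _]].
  case: p hp sz => [|u p] /=; first by move=> _ /eqP; rewrite eq_sym double_eq0 => /eqP j00; rewrite j00 in j0.
  by rewrite inE.
have c0 : 1 <= CS set0.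
  rewrite /CS ler1n lt0n cards_eq0; apply/set0Pn; by exists [ffun _ => ord0].
have : 0 < CS setT.
  apply: lt_le_trans h2; apply: mulr_gt0; first exact: exprn_gt0.
  by apply: lt_le_trans c0.
rewrite /CS ltr0n card_gt0 => /set0Pn[f]; rewrite inE => /andP[lo /pbP nr].
exists (cof T M f); split.
  by move=> v; have := forallP lo v; rewrite inE.
by move=> p; apply: nr; apply/allP => u; rewrite inE.
Qed.
End Real.

Theorem theorem5 (T : finType) (e : rel T)
  (e_sym : symmetric e) (e_irr : irreflexive e) :
  3 <= maxdeg e ->
  nonrep_choosable e (ceil_nat (rep_bound (INR (maxdeg e)))).
Proof.
move=> h3 L hL.
set n := maxdeg e.
set k := ceil_nat _ in hL.
pose M := \max_(v : T) \max_(x <- L v) x.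
have HM : forall v x, x \in L v -> x <= M.
  move=> v x xv; apply: leq_trans (leq_bigmax v).
  by rewrite (big_rem _ xv) /= leq_maxl.
have hD : forall v, deg e v <= n by move=> v; exact: leq_bigmax.
case: (final_real n (ssrnat.leP h3)) => hb1 hb2.
set b := Rplus (Rmult (INR n) (INR n)) _ in hb1 hb2.
have hbR : (n%:R ^+ 2 < b)%R.
  by apply/RltP; rewrite -INRE -RpowE; move: hb1; rewrite /= Rmult_1_r.
have b0 : (0 < b)%R by apply: le_lt_trans hbR; apply: exprn_ge0; apply: ler0n.
apply: (@exists_col T e e_sym L M HM R n k b hD hL hbR) => J.
set x := (n%:R ^+ 2 / b)%R.
have x0 : (0 <= x)%R by rewrite /x divr_ge0 // ?exprn_ge0 ?ler0n // ltW.
have x1 : (x < 1)%R by rewrite /x ltr_pdivrMr // mul1r.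
have hg := @geo _ x J x0 x1.
have hx2 : (0 < (1 - x) ^+ 2)%R by rewrite exprn_gt0 // subr_gt0.
have hS : (\sum_(1 <= j < J.+1) j%:R * x ^+ j.-1 <= ((1 - x) ^+ 2)^-1)%R.
  by rewrite -[X in (_ <= X)%R]mulr1 ler_pdivlMl.
have hA : (b + n%:R * ((1 - x) ^+ 2)^-1 <= k%:R)%R.
  apply/RleP; rewrite /x -!INRE -!RpowE; exact: hb2.
apply: le_trans hA; rewrite lerD2l; apply: ler_wpM2l; [exact: ler0n | exact: hS].
Qed.
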